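(* Let $\delta\geq0$. If a $2$-edge-coloured (red/blue) $K_n$ is $\delta$-close to being split, then it has a vertex incident to at most $(1/4+3\delta)n$ red edges or a vertex incident to at most $(1/4+3\delta)n$ blue edges.
   Context: A $2$-edge-coloured $K_n$ is split if its vertex set can be partitioned into a set spanning only red edges and a set spanning only blue edges. It is $\delta$-close to being split if it can be made into a split colouring by changing the colours of at most $\delta n^2$ edges. *)

(* Defs.v *)
From mathcomp Require Import all_boot all_order all_algebra.
Set Implicit Arguments. Unset Strict Implicit. Unset Printing Implicit Defensive.
Import Order.TTheory GRing.Theory Num.Theory.

(* A 2-edge-colouring of K_n on vertex set 'I_n: c x y = true means the edge
   xy is red, false means blue.  Only values on pairs x <> y are meaningful;
   we require symmetry. *)
Definition colouring (n : nat) := 'I_n -> 'I_n -> bool.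

Definition sym_colouring n (c : colouring n) : Prop :=
  forall x y : 'I_n, c x y = c y x.

Definition is_split n (c : colouring n) : Prop :=
  exists S : {set 'I_n},
    (forall x y, x != y -> x \in S -> y \in S -> c x y) /\
    (forall x y, x != y -> x \notin S -> y \notin S -> ~~ c x y).

Definition num_diff n (c c' : colouring n) : nat :=
  #|[set p : 'I_n * 'I_n | (p.1 < p.2)%N & c p.1 p.2 != c' p.1 p.2]|.

Definition close_to_split (R : realFieldType) n (delta : R) (c : colouring n)
  : Prop :=
  exists c' : colouring n, sym_colouring c' /\ is_split c' /\
    ((num_diff c c')%:R <= delta * (n%:R) ^+ 2)%R.

Definition red_deg n (c : colouring n) (v : 'I_n) : nat :=
  #|[set u | (u != v) && c v u]|.
Definition blue_deg n (c : colouring n) (v : 'I_n) : nat :=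
  #|[set u | (u != v) && ~~ c v u]|.

(* Main.v *)
Require Import Defs.
From mathcomp Require Import all_boot all_order all_algebra.
From mathcomp Require Import zify ring lra.
Import Order.TTheory GRing.Theory Num.Theory.

Lemma card_sum_ind (T : finType) (A : {set T}) :
  #|A| = \sum_(v : T) (v \in A : nat).
Proof.
rewrite -sum1_card big_mkcond /=; apply: eq_bigr => v _.
by case: (v \in A).
Qed.

Lemma agm s t : 4 * (s * t) <= (s + t) ^ 2.
Proof. rewrite sqrnD. case: (leqP t s) => h.
- have [k ->] : exists k, s = t + k by exists (s - t); lia. nia.
- have [k ->] : exists k, t = s + k by exists (t - s); lia. nia.
Qed.

Lemma count_bound n (c c' : colouring n) (S : {set 'I_n}) :
  sym_colouring c -> sym_colouring c' ->
  (forall x y, x != y -> x \in S -> y \in S -> c' x y) ->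
  (forall x y, x != y -> x \notin S -> y \notin S -> ~~ c' x y) ->
  4 * (\sum_v #|[set u | (u != v) && (c v u != (v \in S))]|)
    <= 8 * num_diff c c' + n ^ 2.
Proof.
move=> sc sc' Hr Hb.
set T1 := fun v u : 'I_n => ((v < u)%N && (c v u != c' v u) : nat).
set T2 := fun v u : 'I_n => ((u < v)%N && (c u v != c' u v) : nat).
set T3 := fun v u : 'I_n => ((v \in S) && (u \notin S) && ~~ c v u : nat).
set T4 := fun v u : 'I_n => ((v \notin S) && (u \in S) && c v u : nat).
have pw : forall v u, ((u != v) && (c v u != (v \in S)) : nat)
    <= T1 v u + T2 v u + T3 v u + T4 v u.
  move=> v u; rewrite /T1 /T2 /T3 /T4 (sc u v) (sc' u v).
  case: (boolP (u != v)) => //= Huv.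
  have Hne : v != u by rewrite eq_sym.
  case: (boolP (v \in S)) => Hv; case: (boolP (u \in S)) => Hu /=.
  - rewrite (Hr v u Hne Hv Hu).
    case: (c v u) => //=; rewrite !addn0.
    idtac.
    rewrite ?andbT; case: (ssrnat.ltngtP v u) => //= Heq.
    by move: Hne; rewrite -val_eqE /= Heq eqxx.
  - by case: (c v u); rewrite /= ?addn0 ?addn1.
  - by case: (c v u); rewrite /= ?addn0 ?addn1.
  - rewrite (negbTE (Hb v u Hne Hv Hu)).
    case: (c v u) => //=; rewrite !addn0.
    idtac.
    rewrite ?andbT; case: (ssrnat.ltngtP v u) => //= Heq.
    by move: Hne; rewrite -val_eqE /= Heq eqxx.
have E1 : \sum_v \sum_u T1 v u = num_diff c c'.
  rewrite /num_diff card_sum_ind pair_bigA /=; apply: eq_bigr => p _.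
  by rewrite inE.
have E2 : \sum_v \sum_u T2 v u = \sum_v \sum_u T1 v u.
  by rewrite exchange_big.
have E34 : \sum_v \sum_u T3 v u + \sum_v \sum_u T4 v u
    = #|S| * #|~: S|.
  rewrite [X in _ + X]exchange_big -big_split /=.
  rewrite (@card_sum_ind _ S) big_distrl /=; apply: eq_bigr => v _.
  rewrite (@card_sum_ind _ (~: S)) big_distrr -big_split /=; apply: eq_bigr => u _.
  rewrite /T3 /T4 (sc u v) /= in_setC.
  by case: (v \in S); case: (u \in S); case: (c v u).
have EW : \sum_v #|[set u | (u != v) && (c v u != (v \in S))]|
    <= \sum_v \sum_u (T1 v u + T2 v u + T3 v u + T4 v u).
  apply: leq_sum => v _; rewrite card_sum_ind.
  apply: leq_sum => u _; rewrite inE; exact: pw.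
have EE : \sum_v \sum_u (T1 v u + T2 v u + T3 v u + T4 v u)
   = \sum_v \sum_u T1 v u + \sum_v \sum_u T2 v u +
     (\sum_v \sum_u T3 v u + \sum_v \sum_u T4 v u).
  rewrite -!big_split /=; apply: eq_bigr => v _.
  by rewrite -!big_split /=; apply: eq_bigr => u _; rewrite !addnA.
have Hc := cardsC S; rewrite card_ord in Hc.
move: EW; rewrite EE E34 E2 E1 => EW.
have Hn2 : n ^ 2 = (#|S| + #|~: S|) ^ 2 by rewrite Hc.
have := agm #|S| #|~: S|. rewrite Hn2. lia.
Qed.

Local Open Scope ring_scope.

Theorem proposition3p5 (R : realFieldType) (n : nat) (delta : R)
  (c : colouring n) :
  (0 < n)%N -> 0 <= delta -> sym_colouring c -> close_to_split delta c ->
  exists v : 'I_n,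
    ((red_deg c v)%:R <= (1 / 4 + 3 * delta) * n%:R) \/
    ((blue_deg c v)%:R <= (1 / 4 + 3 * delta) * n%:R).
Proof.
move=> n0 d0 sc [c' [sc' [[S [Hr Hb]] Hd]]].
set w := fun v : 'I_n => #|[set u | (u != v) && (c v u != (v \in S))]|.
have Hcb := @count_bound n c c' S sc sc' Hr Hb.
have [v Hv] : exists v, (n * w v <= \sum_v w v)%N.
  case: (boolP [exists v, (n * w v <= \sum_v w v)%N]) => [/existsP // | /existsPn H].
  exfalso.
  have : (\sum_(v : 'I_n) (\sum_u w u).+1 <= \sum_v n * w v)%N.
    by apply: leq_sum => u _; rewrite ltnNge H.
  rewrite sum_nat_const card_ord -big_distrr /=. nia.
exists v.
have key : (w v)%:R <= (1 / 4 + 3 * delta) * n%:R :> R.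
  have h1 : ((4 * (n * w v))%:R : R) <= (8 * num_diff c c' + n ^ 2)%:R.
    rewrite ler_nat; apply: leq_trans Hcb; rewrite leq_mul2l; exact: Hv.
  rewrite !natrM natrD natrX in h1.
  have hn : (0 : R) < n%:R by rewrite ltr0n.
  have hw : (0 : R) <= (w v)%:R by [].
  move: h1 Hd hn hw d0.
  set W := (w v)%:R; set N := n%:R; set D := (num_diff c c')%:R.
  move=> h1 Hd hn hw d0.
  nra.
case: (boolP (v \in S)) => HvS; [right | left].
- suff -> : blue_deg c v = w v by [].
  rewrite /blue_deg /w; apply: eq_card => u; rewrite !inE HvS.
  by case: (c v u); rewrite ?andbT ?andbF.
- suff -> : red_deg c v = w v by [].
  rewrite /red_deg /w; apply: eq_card => u; rewrite !inE (negbTE HvS).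
  by case: (c v u); rewrite ?andbT ?andbF.
Qed.
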